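(* For any integers $n\ge2$ and $a$, $G(\alpha;n,na,n)\ne\emptyset$ if and only if $a\ge2$ and $\alpha>0$.
   Context: Work on $\mathbb P^1$ over an algebraically closed field. A coherent system of type $(n,d,k)$ is a pair $(E,V)$ with $E$ a vector bundle of rank $n$ and degree $d$ and $V\subset H^0(E)$ a subspace of dimension $k$. The $\alpha$-slope is $\mu_\alpha(E,V)=\frac dn+\alpha\frac kn$; a coherent subsystem $(F,W)$ has $F\subset E$ a subbundle and $W\subset V\cap H^0(F)$; $(E,V)$ is $\alpha$-stable if $\mu_\alpha(F,W)<\mu_\alpha(E,V)$ for all proper coherent subsystems. $G(\alpha;n,d,k)$ is the moduli space of $\alpha$-stable coherent systems of type $(n,d,k)$. *)

(* Defs.v *)
From HB Require Import structures.
From mathcomp Require Import all_boot all_order all_algebra.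
From mathcomp Require Import mpoly.
From mathcomp Require Import reals.
Set Implicit Arguments. Unset Strict Implicit. Unset Printing Implicit Defensive.
Import Order.TTheory GRing.Theory Num.Theory.
Local Open Scope ring_scope.

(* Model of P^1 over an algebraically closed field K: homogeneous coordinates
   (X,Y); global sections of O(d) are homogeneous forms of degree d in
   K[X,Y] (only 0 when d < 0).  By Grothendieck's theorem every vector bundle
   of rank n on P^1 is O(a_1) + ... + O(a_n); we represent E by its splitting
   type a : 'I_n -> int, so deg E = \sum a_i and
   H^0(E) = { s : 'I_n -> K[X,Y] | s i homogeneous of degree a i }. *)

Definition hsec (K : fieldType) (d : int) (p : {mpoly K[2]}) : bool :=
  match d with Posz m => p \is m.-homog | Negz _ => p == 0 end.

Definition is_section (K : fieldType) (n : nat) (a : 'I_n -> int)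
  (s : 'I_n -> {mpoly K[2]}) : Prop := forall i, hsec (a i) (s i).

Definition pt (K : fieldType) (x y : K) : 'I_2 -> K :=
  fun i => if val i == 0%N then x else y.

Definition comb (K : fieldType) (n k : nat) (c : 'I_k -> K)
  (s : 'I_k -> 'I_n -> {mpoly K[2]}) : 'I_n -> {mpoly K[2]} :=
  fun i => \sum_(j < k) c j *: s j i.

Definition sec_indep (K : fieldType) (n k : nat)
  (s : 'I_k -> 'I_n -> {mpoly K[2]}) : Prop :=
  forall c : 'I_k -> K, (forall i, comb c s i = 0) -> forall j, c j = 0.

Definition vec_indep (K : fieldType) (k w : nat) (c : 'I_w -> 'I_k -> K) : Prop :=
  forall e : 'I_w -> K, (forall j, \sum_(l < w) e l * c l j = 0) -> forall l, e l = 0.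

(* A subbundle F of E = (+)O(a_i) of rank r: F = (+)O(b_j) together with a map
   M : F -> E (an n x r matrix of forms, M i j of degree a i - b j) whose fibre
   at every point of P^1 is injective (rank r), i.e. the cokernel is locally
   free.  deg F = \sum b_j. *)
Definition is_subbundle (K : fieldType) (n r : nat) (a : 'I_n -> int)
  (b : 'I_r -> int) (M : 'I_n -> 'I_r -> {mpoly K[2]}) : Prop :=
  (forall i j, hsec (a i - b j) (M i j)) /\
  (forall x y : K, (x, y) != (0, 0) ->
     \rank (\matrix_(i < n, j < r) (M i j).@[pt x y]) = r).

Definition in_subbundle (K : fieldType) (n r : nat) (b : 'I_r -> int)
  (M : 'I_n -> 'I_r -> {mpoly K[2]}) (sec : 'I_n -> {mpoly K[2]}) : Prop :=
  exists t : 'I_r -> {mpoly K[2]},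
    (forall j, hsec (b j) (t j)) /\ forall i, sec i = \sum_(j < r) M i j * t j.

Definition mu_alpha (R : realType) (alpha : R) (r : nat) (d : int) (k : nat) : R :=
  (d%:~R + alpha * k%:R) / r%:R.

(* The coherent system (E,V) with E = (+)O(a_i), V spanned by the k
   linearly independent sections s_1..s_k, is alpha-stable: for every proper
   coherent subsystem (F,W), F a nonzero subbundle and W a subspace of
   V cap H^0(F) (W spanned by the w independent elements sum_l c_l,j s_j),
   mu_alpha(F,W) < mu_alpha(E,V). *)
Definition alpha_stable (K : fieldType) (R : realType) (alpha : R) (n k : nat)
  (a : 'I_n -> int) (s : 'I_k -> 'I_n -> {mpoly K[2]}) : Prop :=
  forall (r : nat) (b : 'I_r -> int) (M : 'I_n -> 'I_r -> {mpoly K[2]})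
         (w : nat) (c : 'I_w -> 'I_k -> K),
    (0 < r)%N -> is_subbundle a b M ->
    vec_indep c -> (forall l, in_subbundle b M (comb (c l) s)) ->
    ((r < n)%N \/ (w < k)%N) ->
    mu_alpha alpha r (\sum_(j < r) b j) w < mu_alpha alpha n (\sum_(i < n) a i) k.

Definition G_nonempty (K : fieldType) (R : realType) (alpha : R)
  (n : nat) (d : int) (k : nat) : Prop :=
  exists (a : 'I_n -> int) (s : 'I_k -> 'I_n -> {mpoly K[2]}),
    \sum_(i < n) a i = d /\
    (forall j, is_section a (s j)) /\ sec_indep s /\
    alpha_stable alpha a s.

(* Main.v *)
Require Import Defs.
From HB Require Import structures.
From mathcomp Require Import all_boot all_order all_algebra.
From mathcomp Require Import mpoly.
From mathcomp Require Import reals.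
From mathcomp Require Import ring lra zify.
Import Order.TTheory GRing.Theory Num.Theory.
Local Open Scope ring_scope.
Set Implicit Arguments. Unset Strict Implicit. Unset Printing Implicit Defensive.


Section PolyH.
Variable K : fieldType.
Local Notation P := {mpoly K[2]}.
Local Notation x0 := (@ord0 1).
Local Notation x1 := (@ord_max 1).

Lemma hsec0 d : hsec d (0 : P).
Proof. by case: d => [m|m] /=; [exact: dhomog0 | ]. Qed.

Lemma hsecD d (p q : P) : hsec d p -> hsec d q -> hsec d (p + q).
Proof.
case: d => [m|m] /=; first by move=> hp hq; exact: rpredD.
by move=> /eqP -> /eqP ->; rewrite addr0.
Qed.

Lemma hsecZ d c (p : P) : hsec d p -> hsec d (c *: p).
Proof.
case: d => [m|m] /=; first by move=> hp; exact: rpredZ.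
by move=> /eqP ->; rewrite scaler0.
Qed.

Lemma hsec_sum d (I : finType) (F : I -> P) :
  (forall i, hsec d (F i)) -> hsec d (\sum_i F i).
Proof.
move=> h; elim/big_ind: _ => //; [exact: hsec0 | exact: hsecD].
Qed.

Lemma hsec_neg m (p : P) : hsec (Negz m) p -> p = 0.
Proof. by move=> /eqP. Qed.

Lemma hsec_ge0 d (p : P) : hsec d p -> p != 0 -> 0 <= d.
Proof. by case: d => [m|m] //= /eqP ->; rewrite eqxx. Qed.

Lemma hsecC c : hsec 0 (c%:MP : P).
Proof. by rewrite /= -alg_mpolyC; apply: rpredZ; exact: dhomog1. Qed.

Lemma homog0_const (p : P) : p \is 0.-homog -> p = (p@_0)%:MP.
Proof.
move=> hp; apply/mpolyP => m; rewrite mcoeffC.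
have [->|nm] := eqVneq m 0%MM; first by rewrite mulr1.
rewrite mulr0; apply: (dhomog_nemf_coeff hp).
by rewrite mdeg_eq0.
Qed.

Lemma homog1_lin (p : P) : p \is 1.-homog ->
  p = p@_U_(x0) *: 'X_x0 + p@_U_(x1) *: 'X_x1.
Proof.
move=> hp; apply/mpolyP => m; rewrite mcoeffD !mcoeffZ !mcoeffX.
have [/mdeg1P [i /eqP ->]| nm] := boolP (mdeg m == 1%N).
  case: i => [[|[|k]] Hi] //.
  - have -> : Ordinal Hi = x0 by apply/val_inj.
    by rewrite eqxx mulr1 (_ : (U_(x1) == U_(x0))%MM = false) ?mulr0 ?addr0 //;
       apply/negP => /eqP /mnmP /(_ x0); rewrite !mnm1E.
  - have -> : Ordinal Hi = x1 by apply/val_inj.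
    by rewrite eqxx mulr1 (_ : (U_(x0) == U_(x1))%MM = false) ?mulr0 ?add0r //;
       apply/negP => /eqP /mnmP /(_ x0); rewrite !mnm1E.
rewrite (dhomog_nemf_coeff hp nm).
have -> : (U_(x0) == m)%MM = false by apply/negP => /eqP E; rewrite -E mdeg1 in nm.
have -> : (U_(x1) == m)%MM = false by apply/negP => /eqP E; rewrite -E mdeg1 in nm.
by rewrite !mulr0 addr0.
Qed.

End PolyH.


Section MxH.
Variable K : fieldType.

Lemma rank_inj m n (A : 'M[K]_(m,n)) :
  (forall e : 'rV_m, e *m A = 0 -> e = 0) -> \rank A = m.
Proof.
move=> h; apply/eqP; rewrite eqn_leq rank_leq_row /=.
have k0 : kermx A == 0.
  apply/rowV0P => v /sub_kermxP; exact: h.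
move: (mxrank_ker A); rewrite (eqP k0) mxrank0 => /esym/eqP.
by rewrite subn_eq0.
Qed.

Lemma inj_rank m n (A : 'M[K]_(m,n)) :
  \rank A = m -> forall e : 'rV_m, e *m A = 0 -> e = 0.
Proof.
move=> hr e he; apply: (@row_free_inj _ _ _ _ A); first by rewrite /row_free hr.
by rewrite he mul0mx.
Qed.

Lemma nonunit_ker n (B : 'M[K]_n) : B \notin unitmx ->
  exists2 c : 'rV_n, c != 0 & c *m B = 0.
Proof.
move=> nB; have : kermx B != 0.
  apply/negP => /eqP k0; move: (mxrank_ker B); rewrite k0 mxrank0 => /esym/eqP.
  rewrite subn_eq0 => hn; move: nB; rewrite -row_free_unit /row_free.
  by rewrite eqn_leq rank_leq_row hn.
by case/rowV0Pn => v /sub_kermxP hv nz; exists v.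
Qed.

End MxH.

Section Closed.
Variable K : closedFieldType.

Lemma exists_eigen n (G : 'M[K]_n.+1) :
  exists lam, exists2 v : 'rV_n.+1, v *m G = lam *: v & v != 0.
Proof.
have : size (char_poly G) != 1%N by rewrite size_char_poly.
case/closed_rootP => lam; rewrite -eigenvalue_root_char => /eigenvalueP [v h1 h2].
by exists lam, v.
Qed.

Lemma pencil n (A B : 'M[K]_n.+1) :
  exists x y, exists2 c : 'rV_n.+1, c != 0 &
     ((x != 0) || (y != 0)) /\ x *: (c *m A) + y *: (c *m B) = 0.
Proof.
have [uB|nB] := boolP (B \in unitmx).
  have [lam [v hv nz]] := exists_eigen (A *m invmx B).
  exists 1, (- lam), v => //; split; first by rewrite oner_eq0.
  have : v *m A *m invmx B *m B = lam *: v *m B by rewrite -[v *m A *m _]mulmxA hv.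
  rewrite mulmxKV // => ->; rewrite scale1r -scalemxAl scaleNr.
  by rewrite subrr.
case: (nonunit_ker nB) => c nz hc; exists 0, 1, c => //; split.
  by rewrite oner_eq0 orbT.
by rewrite hc scale0r scaler0 addr0.
Qed.

End Closed.

Section Inv.
Variable K : fieldType.
Variable n' : nat.
Local Notation n := n'.+1.

Definition Pm : 'M[K]_n := \matrix_(j, i) ((val j == ((val i).+1 %% n)%N)%:R).
Definition E00 : 'M[K]_n := \matrix_(j, i) (((j == ord0) && (i == ord0))%:R).

Definition sh (t : nat) (v : 'rV[K]_n) : 'rV[K]_n := \row_i v 0 (inord ((i + t) %% n)).

Lemma shP v : v *m Pm = sh 1 v.
Proof.
apply/rowP => i; rewrite !mxE (bigD1 (inord ((i + 1) %% n))) //= big1.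
  by rewrite /Pm mxE /= inordK ?ltn_mod // addn1 eqxx mulr1 addr0.
move=> j hj; rewrite /Pm mxE; case: eqP => [h|]; last by rewrite mulr0.
by case/eqP: hj; apply/val_inj; rewrite /= inordK ?ltn_mod // addn1.
Qed.

Lemma shS t v : sh t.+1 v = sh t v *m Pm.
Proof.
rewrite shP; apply/rowP => i; rewrite !mxE inordK ?ltn_mod //.
congr (v 0 _); apply/val_inj; rewrite /= !inordK ?ltn_mod //.
by rewrite modnDml addn1 addSnnS.
Qed.

Lemma E00P v : v *m E00 = v 0 ord0 *: (delta_mx ord0 ord0 : 'rV[K]_n).
Proof.
apply/rowP => i; rewrite /E00 !mxE (bigD1 ord0) //= big1.
  by rewrite mxE eqxx /= addr0.
by move=> j /negbTE hj; rewrite mxE hj mulr0.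
Qed.

Lemma inv_full w (C : 'M[K]_(w, n)) : C != 0 ->
  (C *m Pm <= C)%MS -> (C *m E00 <= C)%MS -> \rank C = n.
Proof.
move=> nz hP hE.
have shC : forall v t, (v <= C)%MS -> (sh t v <= C)%MS.
  move=> v t hv; elim: t => [|t IH].
    suff -> : sh 0 v = v by [].
    apply/rowP => i; rewrite mxE addn0 modn_small // ; congr (v _ _).
      by apply/val_inj; rewrite /= inordK.
  by rewrite shS; apply: submx_trans (submxMr _ IH) hP.
case/rowV0Pn: nz => v hv nzv.
have [k hk] : exists k, v 0 k != 0.
  apply/existsP; apply: contraR nzv => /existsPn h; apply/eqP/rowP => k.
  by rewrite mxE; move: (h k); rewrite negbK => /eqP ->.
have he0 : ((delta_mx ord0 ord0 : 'rV[K]_n) <= C)%MS.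
  have h1 : (sh k v *m E00 <= C)%MS := submx_trans (submxMr _ (shC _ k hv)) hE.
  rewrite E00P mxE /= in h1.
  have e : inord ((0 + k) %% n) = k by apply/val_inj; rewrite /= add0n modn_small // inordK.
  rewrite e in h1.
  by have := scalemx_sub (v 0 k)^-1 h1; rewrite scalerA mulVf // scale1r => h2; exact: h2.
apply/eqP; rewrite eqn_leq rank_leq_col /=.
have s1 : ((1%:M : 'M[K]_n) <= C)%MS.
  apply/row_subP => j; rewrite row1.
  have -> : delta_mx 0 j = sh (n - j) (delta_mx ord0 ord0).
    apply/rowP => i; rewrite !mxE /=.
    congr ((_ : bool)%:R); apply/idP/idP.
      move=> /eqP ->; apply/eqP/val_inj; rewrite /= inordK ?ltn_mod //.
      by rewrite subnKC ?modnn // ltnW.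
    move=> /eqP /(congr1 val); rewrite /= inordK ?ltn_mod //.
    move=> h; apply/eqP/val_inj => /=.
    have hi := ltn_ord i; have hj := ltn_ord j.
    move: h; have [le|lt] := leqP j i.
      have -> : (i + (n - j) = (i - j) + n)%N by lia.
      rewrite modnDr modn_small; lia.
    rewrite modn_small; lia.
  exact: shC.
by move: (mxrankS s1); rewrite mxrank1.
Qed.

End Inv.


Section Sub.
Variable K : fieldType.
Local Notation P := {mpoly K[2]}.

Lemma id_subbundle n (e : 'I_n -> int) :
  is_subbundle e e (fun i j => ((i == j)%:R : P)).
Proof.
split.
  move=> i j; have [->|ne] := eqVneq i j; last exact: hsec0.
  by rewrite subrr /=; exact: dhomog1.
move=> x y _.
have -> : (\matrix_(i < n, j < n) (((i == j)%:R : P)).@[pt x y]) = 1%:M.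
  by apply/matrixP => i j; rewrite !mxE; case: (i == j); rewrite ?meval1 ?meval0.
exact: mxrank1.
Qed.

Variable n' : nat.
Local Notation n := n'.+1.

Definition Mc (i0 : 'I_n) : 'I_n -> 'I_n' -> P := fun i j => ((i == lift i0 j)%:R).

Lemma comp_subbundle (e : 'I_n -> int) i0 :
  is_subbundle e (fun j => e (lift i0 j)) (Mc i0).
Proof.
split.
  move=> i j; rewrite /Mc; have [->|ne] := eqVneq i (lift i0 j); last exact: hsec0.
  by rewrite subrr /=; exact: dhomog1.
move=> x y _; rewrite -mxrank_tr; apply: rank_inj => v hv.
apply/rowP => j; move/rowP: hv => /(_ (lift i0 j)); rewrite !mxE.
rewrite (bigD1 j) //= big1 ?addr0.
  by rewrite !mxE /Mc eqxx meval1 mulr1.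
move=> k hk; rewrite !mxE /Mc.
have -> : (lift i0 j == lift i0 k) = false.
  by apply/negbTE; apply: contra hk => /eqP /lift_inj ->.
by rewrite meval0 mulr0.
Qed.

Lemma comp_in_subbundle (e : 'I_n -> int) i0 (sec : 'I_n -> P) :
  (forall i, hsec (e i) (sec i)) -> sec i0 = 0 ->
  in_subbundle (fun j => e (lift i0 j)) (Mc i0) sec.
Proof.
move=> hs h0; exists (fun j => sec (lift i0 j)); split => // i.
rewrite /Mc; case: (unliftP i0 i) => [j ->|->].
  rewrite (bigD1 j) //= eqxx mul1r big1 ?addr0 // => k hk.
  have -> : (lift i0 j == lift i0 k) = false.
    by apply/negbTE; apply: contra hk => /eqP /lift_inj ->.
  by rewrite mul0r.
rewrite h0 big1 // => k _.
by rewrite (negbTE (neq_lift i0 k)) mul0r.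
Qed.

Lemma sum_lift (e : 'I_n -> int) (i0 : 'I_n) :
  \sum_(j < n') e (lift i0 j) = \sum_(i < n) e i - e i0.
Proof. by rewrite (bigD1_ord i0) //= addrC addrK. Qed.

End Sub.


Section Fwd1.
Variable K : fieldType.
Variable R : realType.
Variable alpha : R.
Local Notation P := {mpoly K[2]}.

Lemma stable_alpha_pos n k (e : 'I_n -> int) (s : 'I_k -> 'I_n -> P) :
  (0 < n)%N -> (0 < k)%N -> alpha_stable alpha e s -> 0 < alpha.
Proof.
move=> hn hk hst.
have Hv : vec_indep (fun (_ : 'I_0) (_ : 'I_k) => (0 : K)) by move=> ? ? [].
have Hi : forall l : 'I_0, in_subbundle e (fun i j => ((i == j)%:R : P))
    (comb ((fun _ _ => 0) l) s) by case.
move: (hst n e _ 0%N _ hn (@id_subbundle K n e) Hv Hi (or_intror hk)).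
 rewrite /mu_alpha mulr0 addr0.
have hn' : 0 < (n%:R : R) by rewrite ltr0n.
rewrite ltr_pM2r ?invr_gt0 // => h.
have hk' : 0 < (k%:R : R) by rewrite ltr0n.
by rewrite -(pmulr_lgt0 _ hk'); lra.
Qed.

End Fwd1.

Lemma arith1 (R : realType) (m1 m2 A E al : R) : 0 < m1 -> m2 = m1 + 1 ->
  (m2 * A - E + al * m2)/m1 < (m2 * A + al * m2)/m2 -> A + al < E.
Proof.
move=> hm ->.
have -> : ((m1+1)*A + al*(m1+1))/(m1+1) = A + al by field; lra.
rewrite ltr_pdivrMr; last lra.
lra.
Qed.

Lemma arith2 (R : realType) (m1 m2 W A al : R) : 0 < m1 -> m2 = m1 + 1 ->
  0 <= A -> al * m1 <= al * W ->
  (m2 * A - 0 + al * W)/m1 < (m2 * A + al * m2)/m2 -> False.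
Proof.
move=> hm -> hA hW.
have -> : ((m1+1) * A + al * (m1+1))/(m1+1) = A + al by field; lra.
rewrite ltr_pdivrMr; last lra.
lra.
Qed.

Lemma natS2 (R : realType) (n : nat) : (n.+2%:R : R) = n%:R + 2.
Proof. by rewrite -addn2 natrD. Qed.
Lemma natS1 (R : realType) (n : nat) : (n.+1%:R : R) = n%:R + 1.
Proof. by rewrite -addn1 natrD. Qed.

Section Fwd2.
Variable K : fieldType.
Variable R : realType.
Variable alpha : R.
Local Notation P := {mpoly K[2]}.
Variable n' : nat.
Local Notation n := n'.+2.
Variable a : int.
Variable e : 'I_n -> int.
Variable s : 'I_n -> 'I_n -> P.
Hypothesis hsum : \sum_(i < n) e i = n%:Z * a.
Hypothesis hsec_s : forall j, is_section e (s j).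
Hypothesis hst : alpha_stable alpha e s.

Definition cid : 'I_n -> 'I_n -> K := fun l j => (l == j)%:R.

Lemma vec_indep_id : vec_indep cid.
Proof.
move=> f hf l; move: (hf l); rewrite (bigD1 l) //= /cid eqxx mulr1 big1 ?addr0 //.
by move=> j /negbTE; rewrite eq_sym => ->; rewrite mulr0.
Qed.

Lemma in_subbundle_ext r (b : 'I_r -> int) (M : 'I_n -> 'I_r -> P) (f g : 'I_n -> P) :
  (forall i, f i = g i) -> in_subbundle b M f -> in_subbundle b M g.
Proof. by move=> h [t [h1 h2]]; exists t; split => // i; rewrite -h. Qed.

Lemma comb_id l i : comb (cid l) s i = s l i.
Proof.
rewrite /comb (bigD1 l) //= /cid eqxx scale1r big1 ?addr0 //.
by move=> j /negbTE; rewrite eq_sym => ->; rewrite scale0r.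
Qed.

Lemma neg_bound i0 : e i0 < 0 -> a%:~R + alpha < (e i0)%:~R.
Proof.
move=> hneg.
have hs0 : forall l, s l i0 = 0.
  move=> l; move: (hsec_s l i0); case: (e i0) hneg => [m|m] //= _; exact: hsec_neg.
have Hi : forall l, in_subbundle (fun j => e (lift i0 j)) (@Mc K n'.+1 i0) (comb (cid l) s).
  move=> l; apply: (in_subbundle_ext (f := s l)) => [i|]; first by rewrite comb_id.
  apply: comp_in_subbundle => //; exact: hsec_s.
move: (@hst n'.+1 (fun j => e (lift i0 j)) (@Mc K n'.+1 i0) n cid
  (ltn0Sn _) (@comp_subbundle K n'.+1 e i0) vec_indep_id Hi (or_introl (ltnSn _))).
rewrite sum_lift hsum /mu_alpha intrB intrM.
rewrite -[((n%:Z)%:~R : R)]/(n%:R).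
apply: arith1; first by rewrite ltr0n.
by rewrite natS1.
Qed.

Lemma all_nonneg : 0 <= a -> 0 < alpha -> forall i, 0 <= e i.
Proof.
move=> ha hal i; rewrite leNgt; apply/negP => hi.
have := neg_bound hi.
have : (a%:~R : R) >= 0 by rewrite ler0z.
have : ((e i)%:~R : R) < 0 by rewrite ltrz0.
lra.
Qed.

Lemma a_nonneg : 0 < alpha -> 0 <= a.
Proof.
move=> hal; rewrite leNgt; apply/negP => ha.
have hlt : forall i, a < e i.
  move=> i; have [hi|hi] := ltP (e i) 0.
    have := neg_bound hi; rewrite -(ltrz0 R) in ha.
    move=> h; rewrite -(ltr_int R); lra.
  exact: lt_le_trans ha hi.
have : \sum_(i < n) a < \sum_(i < n) e i.
  rewrite (bigD1 ord0) //= [X in _ < X](bigD1 ord0) //=.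
  by apply: ltr_leD; [exact: hlt | apply: ler_sum => i _; exact: ltW].
by rewrite hsum sumr_const card_ord -mulr_natl natz ltxx.
Qed.

Lemma zero_case i0 : e i0 = 0 -> 0 <= a -> 0 < alpha -> False.
Proof.
move=> he0 ha hal.
pose lam j := (s j i0)@_0.
have hlam : forall j, s j i0 = (lam j)%:MP.
  move=> j; apply: homog0_const; move: (hsec_s j i0); rewrite he0 //.
pose L : 'M[K]_(n, 1) := \matrix_(j, _) lam j.
pose Kr := row_base (kermx L).
pose w := \rank (kermx L).
pose c : 'I_w -> 'I_n -> K := fun l j => Kr l j.
have hKr : Kr *m L = 0 by apply/sub_kermxP; rewrite eq_row_base.
have hvi : vec_indep c.
  move=> f hf l.
  have hz : (\row_l f l) *m Kr = 0.
    apply/rowP => j; rewrite !mxE; apply: etrans (hf j).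
    by apply: eq_bigr => k _; rewrite mxE.
  have := inj_rank _ hz; rewrite (eqP (row_base_free _)) => /(_ erefl) /rowP /(_ l).
  by rewrite !mxE.
have hin : forall l, in_subbundle (fun j => e (lift i0 j)) (@Mc K n'.+1 i0) (comb (c l) s).
  move=> l; apply: comp_in_subbundle.
    by move=> i; apply: hsec_sum => j; apply: hsecZ; exact: hsec_s.
  rewrite /comb.
  have -> : \sum_(j < n) c l j *: s j i0 = (\sum_(j < n) c l j * lam j)%:MP.
    rewrite raddf_sum; apply: eq_bigr => j _.
    by rewrite hlam; apply/mpolyP => m; rewrite mcoeffZ !mcoeffC mulrA.
  have -> : \sum_(j < n) c l j * lam j = (Kr *m L) l ord0.
    by rewrite mxE; apply: eq_bigr => j _; congr (_ * _); rewrite /L !mxE.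
  have E : (Kr *m L) l ord0 = 0 by rewrite hKr mxE.
  by rewrite E mpolyC0.
have hw : (n'.+1 <= w)%N.
  rewrite /w mxrank_ker; have := rank_leq_col L; lia.
move: (@hst n'.+1 (fun j => e (lift i0 j)) (@Mc K n'.+1 i0) w c
  (ltn0Sn _) (@comp_subbundle K n'.+1 e i0) hvi hin (or_introl (ltnSn _))).
rewrite sum_lift hsum he0 /mu_alpha intrB intrM.
rewrite -[((n%:Z)%:~R : R)]/(n%:R).
apply: arith2; first by rewrite ltr0n.
- by rewrite natS1.
- by rewrite ler0z.
- by apply: ler_wpM2l; [exact: ltW | rewrite ler_nat].
Qed.

End Fwd2.


Section Fwd3.
Variable K : closedFieldType.
Variable R : realType.
Variable alpha : R.
Local Notation P := {mpoly K[2]}.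
Local Notation x0 := (@ord0 1).
Local Notation x1 := (@ord_max 1).
Variable n' : nat.
Local Notation n := n'.+2.
Variable e : 'I_n -> int.
Variable s : 'I_n -> 'I_n -> P.
Hypothesis he1 : forall i, e i = 1.
Hypothesis hsec_s : forall j, is_section e (s j).
Hypothesis hind : sec_indep s.
Hypothesis hst : alpha_stable alpha e s.

Lemma one_case : False.
Proof.
have hlin : forall j i, s j i = (s j i)@_U_(x0) *: 'X_x0 + (s j i)@_U_(x1) *: 'X_x1.
  by move=> j i; apply: homog1_lin; move: (hsec_s j i); rewrite he1.
pose A : 'M[K]_n := \matrix_(j, i) (s j i)@_U_(x0).
pose B : 'M[K]_n := \matrix_(j, i) (s j i)@_U_(x1).
have [x [y [c nzc [nxy hxy]]]] := pencil A B.
pose v := c *m A; pose v' := c *m B.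
have hxy' : forall i, x * v 0 i + y * v' 0 i = 0.
  by move=> i; move/rowP: hxy => /(_ i); rewrite !mxE.
pose cc : 'I_n -> K := fun j => c 0 j.
have hsig : forall i, comb cc s i = v 0 i *: 'X_x0 + v' 0 i *: 'X_x1.
  move=> i; rewrite /comb.
  under eq_bigr => j _ do rewrite hlin scalerDr !scalerA.
  rewrite big_split /= -!scaler_suml !mxE.
  by congr (_ *: _ + _ *: _); apply: eq_bigr => j _; rewrite !mxE.
pose u : 'I_n -> K := fun i => if y != 0 then v 0 i else v' 0 i.
pose ell : P := if y != 0 then 'X_x0 - (x / y) *: 'X_x1 else 'X_x1.
have hsig2 : forall i, comb cc s i = (u i)%:MP * ell.
  move=> i; rewrite hsig mul_mpolyC /u /ell.
  case: (eqVneq y 0) => [y0|ny] /=.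
    have hx : x != 0 by move: nxy; rewrite y0 eqxx orbF.
    have : x * v 0 i = 0 by move: (hxy' i); rewrite y0 mul0r addr0.
    move/eqP; rewrite mulf_eq0 (negbTE hx) /= => /eqP ->.
    by rewrite scale0r add0r.
  have -> : v' 0 i = - (x / y) * v 0 i.
    apply: (mulfI ny).
    have -> : y * v' 0 i = - (x * v 0 i).
      by apply/eqP; rewrite -subr_eq0 opprK addrC (hxy' i).
    by field.
  by rewrite scalerBr scalerA mulNr scaleNr mulrC.
have hell : hsec 1 ell.
  rewrite /ell /=; case: (y != 0).
    apply: rpredB; first by rewrite dhomogX; apply/eqP; apply: mdeg1.
    by apply: rpredZ; rewrite dhomogX; apply/eqP; apply: mdeg1.
  by rewrite dhomogX; apply/eqP; apply: mdeg1.
have [i1 hi1] : exists i, u i != 0.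
  case: (pickP (fun i => u i != 0)) => [i hi|hn]; first by exists i.
  have h0 : forall i, comb cc s i = 0.
    by move=> i; rewrite hsig2; move: (hn i) => /= /negbFE /eqP ->; rewrite mpolyC0 mul0r.
  have := hind h0 => hc; case/eqP: nzc; apply/rowP => j; rewrite mxE; exact: hc.
pose M : 'I_n -> 'I_1 -> P := fun i _ => (u i)%:MP.
have hsub : is_subbundle e (fun _ => 1) M.
  split.
    by move=> i j; rewrite /M he1 subrr; exact: hsecC.
  move=> xx yy _; apply/eqP; rewrite eqn_leq rank_leq_col /= lt0n mxrank_eq0.
  apply/negP => /eqP /matrixP /(_ i1 ord0); rewrite !mxE /M mevalC.
  by move/eqP; rewrite (negbTE hi1).
have hvi : vec_indep (fun (_ : 'I_1) => cc).
  move=> f hf l; rewrite ord1.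
  have : f ord0 *: c = 0.
    by apply/rowP => j; rewrite !mxE; move: (hf j); rewrite big_ord1.
  by move/eqP; rewrite scaler_eq0 (negbTE nzc) orbF => /eqP.
have hin : forall l : 'I_1, in_subbundle (fun _ => 1) M (comb ((fun _ => cc) l) s).
  move=> l; exists (fun _ => ell); split => // i.
  by rewrite big_ord1 hsig2.
move: (@hst 1%N (fun _ => 1) M 1%N (fun _ => cc) (ltn0Sn _) hsub hvi hin
  (or_introl (isT : (1 < n)%N))).
rewrite /mu_alpha big_ord1.
have -> : \sum_(i < n) e i = n%:Z.
  rewrite (eq_bigr (fun _ => 1)); last by move=> i _; rewrite he1.
  by rewrite sumr_const card_ord natz.
rewrite -[((n%:Z)%:~R : R)]/(n%:R) divr1.
have hn : (n%:R : R) != 0 by rewrite pnatr_eq0.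
rewrite mulrDl divff // mulfK // (_ : (1%:~R : R) = 1) // mulr1.
by rewrite ltxx.
Qed.

End Fwd3.


Section Bwd.
Variable K : fieldType.
Local Notation P := {mpoly K[2]}.
Local Notation x0 := (@ord0 1).
Local Notation x1 := (@ord_max 1).
Variable m : nat.
Hypothesis hm : (2 <= m)%N.

Definition mX : 'X_{1..2} := (U_(x0) *+ m)%MM.
Definition mXY : 'X_{1..2} := (U_(x0) *+ m.-1 + U_(x1))%MM.
Definition mY : 'X_{1..2} := (U_(x1) *+ m)%MM.

Lemma mdeg_mX : mdeg mX = m. Proof. by rewrite /mX mdegMn mdeg1 mul1n. Qed.
Lemma mdeg_mY : mdeg mY = m. Proof. by rewrite /mY mdegMn mdeg1 mul1n. Qed.
Lemma mdeg_mXY : mdeg mXY = m.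
Proof. by rewrite /mXY mdegD mdegMn !mdeg1 mul1n addn1 prednK // ltnW. Qed.

Lemma mX_mXY : (mX == mXY) = false.
Proof.
apply/negbTE/negP => /eqP /mnmP /(_ x1).
by rewrite /mX /mXY mnmDE !mulmnE !mnm1E.
Qed.
Lemma mY_mXY : (mY == mXY) = false.
Proof.
apply/negbTE/negP => /eqP /mnmP /(_ x0).
rewrite /mY /mXY mnmDE !mulmnE !mnm1E /=.
by case: m hm => [|[|k]].
Qed.
Lemma mX_mY : (mX == mY) = false.
Proof.
apply/negbTE/negP => /eqP /mnmP /(_ x0).
rewrite /mY /mX !mulmnE !mnm1E /=.
by case: m hm => [|[|k]].
Qed.

Lemma eval_mon (mo : 'X_{1..2}) : ('X_[mo] : P).@[pt 1 0] = (mo x1 == 0%N)%:R.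
Proof.
rewrite mevalX big_ord_recl big_ord1 /pt /= expr1n mul1r.
have -> : lift x0 ord0 = x1 by apply/val_inj.
by case: (mo x1) => [|k]; rewrite ?expr0 ?expr0n.
Qed.

Lemma lift0_x1 : lift ord0 ord0 = x1 :> 'I_2.
Proof. by apply/val_inj. Qed.

Lemma eval_mX : ('X_[mX] : P).@[pt 1 0] = 1.
Proof. by rewrite eval_mon /mX mulmnE mnm1E. Qed.
Lemma eval_mXY : ('X_[mXY] : P).@[pt 1 0] = 0.
Proof. by rewrite eval_mon /mXY mnmDE mulmnE !mnm1E. Qed.
Lemma eval_mY : ('X_[mY] : P).@[pt 1 0] = 0.
Proof. by rewrite eval_mon /mY mulmnE mnm1E /= mul1n; case: m hm. Qed.

Variable n' : nat.
Local Notation n := n'.+1.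

Definition sC (j i : 'I_n) : P :=
  (j == i)%:R *: 'X_[mX] + (Pm K n' j i) *: 'X_[mXY] + (E00 K n' j i) *: 'X_[mY].

Lemma sC_sec j : is_section (fun _ => m%:Z) (sC j).
Proof.
move=> i; rewrite /= /sC.
apply: rpredD; [apply: rpredD|]; apply: rpredZ; rewrite dhomogX; apply/eqP;
  [exact: mdeg_mX | exact: mdeg_mXY | exact: mdeg_mY].
Qed.

Lemma sC_eval j i : (sC j i).@[pt 1 0] = (j == i)%:R.
Proof. by rewrite /sC !mevalD !mevalZ eval_mX eval_mXY eval_mY !mulr0 !addr0 mulr1. Qed.

Lemma sC_cX j i : (sC j i)@_mX = (j == i)%:R.
Proof.
by rewrite /sC !mcoeffD !mcoeffZ !mcoeffX eqxx (eq_sym mXY) mX_mXY (eq_sym mY) mX_mY !mulr0 !addr0 mulr1.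
Qed.
Lemma sC_cXY j i : (sC j i)@_mXY = Pm K n' j i.
Proof.
by rewrite /sC !mcoeffD !mcoeffZ !mcoeffX eqxx mX_mXY mY_mXY !mulr0 add0r addr0 mulr1.
Qed.
Lemma sC_cY j i : (sC j i)@_mY = E00 K n' j i.
Proof.
by rewrite /sC !mcoeffD !mcoeffZ !mcoeffX eqxx mX_mY (eq_sym mXY) mY_mXY !mulr0 !add0r mulr1.
Qed.

End Bwd.


Lemma arith3 (R : realType) (B Rr W Mm N D al : R) : 0 < Rr -> 0 < N -> D = N * Mm ->
  B <= Rr * Mm -> al * W <= al * Rr -> (B < Rr * Mm \/ al * W < al * Rr) ->
  (B + al * W) / Rr < (D + al * N) / N.
Proof.
move=> hR hN -> h1 h2 h3.
have -> : (N * Mm + al * N) / N = Mm + al by field; lra.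
rewrite ltr_pdivrMr //.
case: h3 => h3; lra.
Qed.

Section Bwd2.
Variable K : fieldType.
Variable R : realType.
Variable alpha : R.
Hypothesis hal : 0 < alpha.
Local Notation P := {mpoly K[2]}.
Variable m : nat.
Hypothesis hm : (2 <= m)%N.
Variable n' : nat.
Local Notation n := n'.+1.
Local Notation s := (@sC K m n').

Lemma comb_eval (c : 'I_n -> K) i : (comb c s i).@[pt 1 0] = c i.
Proof.
rewrite /comb raddf_sum (bigD1 i) //= mevalZ sC_eval // eqxx mulr1 big1 ?addr0 //.
by move=> j /negbTE hj; rewrite mevalZ sC_eval // hj mulr0.
Qed.

Lemma sec_indep_sC : sec_indep s.
Proof. by move=> c hc j; rewrite -(comb_eval c j) hc meval0. Qed.

Lemma comb_coef (c : 'I_n -> K) i mo : (comb c s i)@_mo = \sum_j c j * (s j i)@_mo.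
Proof. by rewrite /comb raddf_sum; apply: eq_bigr => j _; exact: mcoeffZ. Qed.

Lemma stable_sC : alpha_stable alpha (fun _ : 'I_n => m%:Z) s.
Proof.
move=> r b M w c hr hsub hvi hin hprop.
have hin' : forall l, exists t : 'I_r -> P, (forall j, hsec (b j) (t j)) /\
    forall i, comb (c l) s i = \sum_(j < r) M i j * t j := hin.
have [t ht] := fin_all_exists hin'.
pose M1 : 'M[K]_(n, r) := \matrix_(i, j) (M i j).@[pt 1 0].
have hM1 : \rank M1 = r.
  by apply: hsub.2; rewrite xpair_eqE oner_eq0.
pose T1 : 'M[K]_(w, r) := \matrix_(l, j) (t l j).@[pt 1 0].
pose C : 'M[K]_(w, n) := \matrix_(l, j) c l j.
have hCw : \rank C = w.
  apply: rank_inj => e he; apply/rowP => l; rewrite mxE.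
  apply: (hvi (fun l => e 0 l)) => j.
  move/rowP: he => /(_ j); rewrite !mxE => he.
  by rewrite -[X in _ = X]he; apply: eq_bigr => k _; rewrite /C mxE.
have hC : C = T1 *m M1^T.
  apply/matrixP => l i; rewrite !mxE -(comb_eval (c l) i) (ht l).2 raddf_sum.
  by apply: eq_bigr => j _; rewrite !mxE mulrC; exact: mevalM.
have hwr : (w <= r)%N.
  by have := mxrankM_maxr T1 M1^T; rewrite -hC hCw mxrank_tr hM1.
have hcol : forall j, exists i, M i j != 0.
  move=> j; case: (pickP (fun i => M i j != 0)) => [i hi|hn]; first by exists i.
  exfalso.
  have hz : (delta_mx 0 j : 'rV[K]_r) *m M1^T = 0.
    rewrite -rowE; apply/rowP => i; rewrite !mxE.
    by move: (hn i) => /= /negbFE /eqP ->; rewrite meval0.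
  have := inj_rank (A := M1^T) _ hz; rewrite mxrank_tr hM1 => /(_ erefl) /rowP /(_ j).
  by rewrite !mxE !eqxx => /eqP; rewrite oner_eq0.
have hb : forall j, b j <= m%:Z.
  move=> j; case: (hcol j) => i hi.
  by have := hsec_ge0 (hsub.1 i j) hi; rewrite subr_ge0.
have hsumb : \sum_j b j <= r%:Z * m%:Z.
  have -> : r%:Z * m%:Z = \sum_(j < r) m%:Z by rewrite sumr_const card_ord -mulr_natl natz.
  by apply: ler_sum => j _; exact: hb.
case: (boolP ((\sum_j b j < r%:Z * m%:Z) || (w < r)%N)) => hcase.
  rewrite /mu_alpha; apply: (arith3 (Mm := m%:R)).
  - by rewrite ltr0n.
  - by rewrite ltr0n.
  - by rewrite sumr_const card_ord rmorphMn /= -mulr_natl.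
  - by move: hsumb; rewrite -(ler_int R) intrM => h; exact: h.
  - by apply: ler_wpM2l; [exact: ltW | rewrite ler_nat].
  case/orP: hcase => h; [left | right].
    by move: h; rewrite -(ltr_int R) intrM => h; exact: h.
  by rewrite ltr_pM2l // ltr_nat.
exfalso.
move: hcase; rewrite negb_or -leNgt -leqNgt => /andP [hge hge'].
have hweq : w = r by apply/eqP; rewrite eqn_leq hwr.
have hrn : (r < n)%N by case: hprop => // h; rewrite -hweq.
have hbm : forall j, b j = m%:Z.
  have hs0 : \sum_j (m%:Z - b j) = 0.
    rewrite sumrB sumr_const card_ord -mulr_natl natz.
    by apply/eqP; rewrite subr_eq0 eq_le hge hsumb.
  move=> j; apply/eqP; rewrite eq_sym -subr_eq0.
  by apply/eqP; apply: (psumr_eq0P _ hs0) => // k _; rewrite subr_ge0.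
have hMc : forall i j, M i j = (M1 i j)%:MP.
  move=> i j; have h := hsub.1 i j; rewrite hbm subrr /= in h.
  have e := homog0_const h; rewrite mxE {2}e mevalC; exact: e.
have hrow : forall l mo, \row_i (comb (c l) s i)@_mo = \row_j (t l j)@_mo *m M1^T.
  move=> l mo; apply/rowP => i; rewrite mxE (ht l).2 raddf_sum [RHS]mxE.
  apply: eq_bigr => j _; rewrite (hMc i j).
  have -> : (M1^T j i) = M1 i j by rewrite mxE.
  rewrite [RHS]mulrC !mxE.
  by rewrite -[LHS]/(mcoeff mo _) mcoeffCM.
have hCM : (C <= M1^T)%MS by rewrite hC submxMl.
have hMC : (M1^T <= C)%MS.
  by rewrite -(mxrank_leqif_sup hCM).2 hCw mxrank_tr hM1 hweq.
have hXY : forall l, row l C *m Pm K n' = \row_i (comb (c l) s i)@_(mXY m).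
  move=> l; apply/rowP => i; rewrite !mxE comb_coef; apply: eq_bigr => j _.
  by rewrite !mxE sC_cXY // /Pm mxE.
have hYY : forall l, row l C *m E00 K n' = \row_i (comb (c l) s i)@_(mY m).
  move=> l; apply/rowP => i; rewrite !mxE comb_coef; apply: eq_bigr => j _.
  by rewrite !mxE sC_cY // /E00 mxE.
have hP : (C *m Pm K n' <= C)%MS.
  apply/row_subP => l; rewrite row_mul hXY hrow.
  exact: submx_trans (submxMl _ _) hMC.
have hE : (C *m E00 K n' <= C)%MS.
  apply/row_subP => l; rewrite row_mul hYY hrow.
  exact: submx_trans (submxMl _ _) hMC.
have hC0 : C != 0 by rewrite -mxrank_eq0 hCw hweq -lt0n.
have := inv_full hC0 hP hE; rewrite hCw hweq => hrn'.
by move: hrn; rewrite hrn' ltnn.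
Qed.

End Bwd2.

Unset Implicit Arguments.

Theorem proposition9p1 (K : closedFieldType) (R : realType) (n : nat) (a : int)
  (alpha : R) :
  (2 <= n)%N ->
  (G_nonempty K alpha n (n%:Z * a) n <-> (2 <= a)%R /\ 0 < alpha).
Proof.
case: n => [|[|n']] // _; split.
  case=> e [s [hsum [hsec [hind hst]]]].
  have hal : 0 < alpha := stable_alpha_pos (isT : (0 < n'.+2)%N) (isT : (0 < n'.+2)%N) hst.
  split => //.
  have ha0 := a_nonneg hsum hsec hst hal.
  rewrite leNgt; apply/negP => ha2.
  have hnn := all_nonneg hsum hsec hst ha0 hal.
  case: (pickP (fun i => e i == 0)) => [i0 /eqP hi0 | hne].
    by case: (zero_case hsum hsec hst hi0 ha0 hal).
  have hge1 : forall i, 0 <= e i - 1.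
    move=> i; rewrite subr_ge0; have := hnn i; have := hne i.
    by rewrite /= le_eqVlt eq_sym => -> /=.
  have hs : \sum_(i < n'.+2) (e i - 1) = n'.+2%:Z * (a - 1).
    by rewrite sumrB hsum sumr_const card_ord mulrBr mulr1 -mulr_natl mulr1 natz.
  have ha1 : a = 1.
    have : 0 <= n'.+2%:Z * (a - 1) by rewrite -hs; apply: sumr_ge0 => i _.
    by rewrite pmulr_rge0 // subr_ge0 => h; lia.
  have he1 : forall i, e i = 1.
    move=> i; apply/eqP; rewrite -subr_eq0; apply/eqP.
    have hz : \sum_(i < n'.+2) (e i - 1) = 0 by rewrite hs ha1 subrr mulr0.
    exact: (psumr_eq0P (fun k _ => hge1 k) hz).
  exact: one_case he1 hsec hind hst.
case=> ha hal.
case: a ha => [m|m] // hm.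
have hm' : (1 < m)%N by [].
exists (fun _ => m%:Z), (sC K m (n' := n'.+1)); split.
  by rewrite sumr_const card_ord -mulr_natl natz.
split; first exact: sC_sec.
split; first exact: sec_indep_sC.
exact: stable_sC.
Qed.
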